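(* Let $D\subseteq\mathbb{R}^3\setminus\{0\}$ and $I\subseteq\mathbb{R}$ be open, $a:I\to\mathbb{R}$ smooth and nowhere zero, $b:D\times I\to\mathbb{R}$ and $\varphi:D\to\mathbb{R}$ smooth, and $\vec\mu(\vec M,\vec\gamma)=a(s)\nabla_{\vec\gamma}\varphi(\vec\gamma)+b(\vec\gamma,s)\vec\gamma$ with $s=\vec M\cdot\vec\gamma$, on $\Omega=\{(\vec M,\vec\gamma):\vec\gamma\in D,\ \vec M\cdot\vec\gamma\in I\}$. Then $\Pi_{\vec\mu}$ defines a Poisson bracket on $\Omega$, and for any antiderivative $A$ of $1/a$ on $I$ (assuming $I$ an interval), $C(\vec M,\vec\gamma)=A(\vec M\cdot\vec\gamma)+\varphi(\vec\gamma)$ is a Casimir function of $\Pi_{\vec\mu}$.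
   Context: Coordinates on $\mathbb{R}^6$ are $(\vec M,\vec\gamma)=(M_1,M_2,M_3,\gamma_1,\gamma_2,\gamma_3)$. For a smooth $\vec\mu=(\mu_1,\mu_2,\mu_3)$ of $(\vec M,\vec\gamma)$, $\Pi_{\vec\mu}$ is the skew-symmetric $6\times6$ matrix $$\Pi_{\vec\mu}=\begin{bmatrix}0&-M_3-\mu_3&M_2+\mu_2&0&-\gamma_3&\gamma_2\\ M_3+\mu_3&0&-M_1-\mu_1&\gamma_3&0&-\gamma_1\\ -M_2-\mu_2&M_1+\mu_1&0&-\gamma_2&\gamma_1&0\\ 0&-\gamma_3&\gamma_2&0&0&0\\ \gamma_3&0&-\gamma_1&0&0&0\\ -\gamma_2&\gamma_1&0&0&0&0\end{bmatrix},$$ it ''defines a Poisson bracket'' if $\{f,g\}_{\vec\mu}=(\nabla f)^T\Pi_{\vec\mu}\nabla g$ satisfies the Jacobi identity, and a Casimir function is a smooth $C$ with $\Pi_{\vec\mu}\nabla C=0$. *)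

(* Defs.v *)
(* classical real analysis on R^n, points represented as nat -> R
   (only coordinates 0..n-1 are meaningful). *)
From Stdlib Require Import Reals Lra Classical ClassicalEpsilon.
Open Scope R_scope.

Definition vec := nat -> R.

Definition upd (x : vec) (i : nat) (t : R) : vec :=
  fun j => if Nat.eqb j i then t else x j.

Definition partial_lim (i : nat) (f : vec -> R) (x : vec) (l : R) : Prop :=
  derivable_pt_lim (fun t => f (upd x i t)) (x i) l.

(* the i-th partial derivative (meaningful when it exists) *)
Definition pd (i : nat) (f : vec -> R) (x : vec) : R :=
  epsilon (inhabits 0) (fun l => partial_lim i f x l).

Fixpoint pds (l : list nat) (f : vec -> R) : vec -> R :=
  match l with
  | nil => f
  | cons i l' => pd i (pds l' f)
  end.

Definition openn (n : nat) (U : vec -> Prop) : Prop :=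
  forall x, U x -> exists r, 0 < r /\
    forall y, (forall j, (j < n)%nat -> Rabs (y j - x j) < r) -> U y.

Definition cont_on_at (n : nat) (U : vec -> Prop) (f : vec -> R) (x : vec) : Prop :=
  forall eps, 0 < eps -> exists delta, 0 < delta /\
    forall y, U y -> (forall j, (j < n)%nat -> Rabs (y j - x j) < delta) ->
      Rabs (f y - f x) < eps.

Definition smooth (n : nat) (U : vec -> Prop) (f : vec -> R) : Prop :=
  forall (l : list nat), (forall i, List.In i l -> (i < n)%nat) ->
    forall x, U x ->
      cont_on_at n U (pds l f) x /\
      forall i, (i < n)%nat -> partial_lim i (pds l f) x (pd i (pds l f) x).

Fixpoint rsum (n : nat) (f : nat -> R) : R :=
  match n with
  | O => 0
  | S m => rsum m f + f m
  end.

Definition mk3 (g1 g2 g3 : R) : vec :=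
  fun j => match j with 0%nat => g1 | 1%nat => g2 | _ => g3 end.

(* coordinates on R^6: x 0, x 1, x 2 = M1, M2, M3 ; x 3, x 4, x 5 = g1, g2, g3 *)
Definition sM (x : vec) : R := x 0%nat * x 3%nat + x 1%nat * x 4%nat + x 2%nat * x 5%nat.

Definition gradphi (phi : R -> R -> R -> R) (k : nat) (g1 g2 g3 : R) : R :=
  pd k (fun y => phi (y 0%nat) (y 1%nat) (y 2%nat)) (mk3 g1 g2 g3).

Definition mu (a : R -> R) (b : R -> R -> R -> R -> R) (phi : R -> R -> R -> R)
  (k : nat) (x : vec) : R :=
  a (sM x) * gradphi phi k (x 3%nat) (x 4%nat) (x 5%nat)
  + b (x 3%nat) (x 4%nat) (x 5%nat) (sM x) * x (3 + k)%nat.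

Definition Pi (m : nat -> vec -> R) (x : vec) (i j : nat) : R :=
  let M1 := x 0%nat + m 0%nat x in
  let M2 := x 1%nat + m 1%nat x in
  let M3 := x 2%nat + m 2%nat x in
  let g1 := x 3%nat in let g2 := x 4%nat in let g3 := x 5%nat in
  match i, j with
  | 0%nat, 1%nat => - M3 | 0%nat, 2%nat => M2 | 0%nat, 4%nat => - g3 | 0%nat, 5%nat => g2
  | 1%nat, 0%nat => M3 | 1%nat, 2%nat => - M1 | 1%nat, 3%nat => g3 | 1%nat, 5%nat => - g1
  | 2%nat, 0%nat => - M2 | 2%nat, 1%nat => M1 | 2%nat, 3%nat => - g2 | 2%nat, 4%nat => g1
  | 3%nat, 1%nat => - g3 | 3%nat, 2%nat => g2
  | 4%nat, 0%nat => g3 | 4%nat, 2%nat => - g1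
  | 5%nat, 0%nat => - g2 | 5%nat, 1%nat => g1
  | _, _ => 0
  end.

Definition bracket (m : nat -> vec -> R) (f g : vec -> R) (x : vec) : R :=
  rsum 6%nat (fun i => rsum 6%nat (fun j => pd i f x * Pi m x i j * pd j g x)).

Definition poisson_on (U : vec -> Prop) (m : nat -> vec -> R) : Prop :=
  forall f g h : vec -> R, smooth 6%nat U f -> smooth 6%nat U g -> smooth 6%nat U h ->
    forall x, U x ->
      bracket m f (bracket m g h) x + bracket m g (bracket m h f) x
      + bracket m h (bracket m f g) x = 0.

Definition casimir_on (U : vec -> Prop) (m : nat -> vec -> R) (C : vec -> R) : Prop :=
  smooth 6%nat U C /\
  forall x, U x -> forall i, (i < 6)%nat -> rsum 6%nat (fun j => Pi m x i j * pd j C x) = 0.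

Definition is_interval (I : R -> Prop) : Prop :=
  forall s t u, I s -> I t -> s <= u <= t -> I u.

(* Main.v *)
Require Import Defs.
From Stdlib Require Import Reals Lra Lia Classical ClassicalEpsilon FunctionalExtensionality List.
Import ListNotations.
Open Scope R_scope.

Lemma upd_same x i t : upd x i t i = t.
Proof. unfold upd; rewrite Nat.eqb_refl; auto. Qed.
Lemma upd_other x i t j : j <> i -> upd x i t j = x j.
Proof. intro H; unfold upd; destruct (Nat.eqb_spec j i); [contradiction|auto]. Qed.

Lemma pd_spec i f x L : partial_lim i f x L -> pd i f x = L.
Proof.
  intro H. unfold pd.
  assert (H2 := epsilon_spec (inhabits 0) (fun l => partial_lim i f x l) (ex_intro _ L H)).
  eapply uniqueness_limite; eauto.
Qed.

Lemma lim_local f g x0 l r : 0 < r -> (forall t, Rabs (t - x0) < r -> f t = g t) ->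
  derivable_pt_lim f x0 l -> derivable_pt_lim g x0 l.
Proof.
  intros Hr Heq H eps He. destruct (H eps He) as [d Hd].
  assert (Hm : 0 < Rmin d r) by (apply Rmin_pos; [apply cond_pos|lra]).
  exists (mkposreal _ Hm). intros h Hh Hh2. simpl in Hh2.
  rewrite <- !Heq. apply Hd; auto. apply Rlt_le_trans with (1:=Hh2); apply Rmin_l.
  rewrite Rminus_diag, Rabs_R0; lra.
  replace (x0 + h - x0) with h by ring. apply Rlt_le_trans with (1:=Hh2); apply Rmin_r.
Qed.

Lemma deriv_cont G s L : derivable_pt_lim G s L ->
  forall eps, 0 < eps -> exists d, 0 < d /\ forall u, Rabs (u - s) < d -> Rabs (G u - G s) < eps.
Proof.
  intros H eps He.
  assert (Hc : continuity_pt G s) by (apply derivable_continuous_pt; exists L; exact H).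
  destruct (Hc eps He) as [alp [Ha Hb]]. exists alp; split; auto.
  intros u Hu. destruct (Req_dec u s) as [->|Hne].
  rewrite Rminus_diag, Rabs_R0; lra.
  apply (Hb u). split. split; [exact I| auto]. simpl. unfold R_dist. exact Hu.
Qed.

Lemma fin_min (m : nat) (P : nat -> R -> Prop) :
  (forall j d d', 0 < d' <= d -> P j d -> P j d') ->
  (forall j, (j < m)%nat -> exists d, 0 < d /\ P j d) ->
  exists d, 0 < d /\ forall j, (j < m)%nat -> P j d.
Proof.
  intros Hmon. induction m as [|m IH]; intros H.
  - exists 1; split; [lra| intros j Hj; lia].
  - destruct IH as [d1 [Hd1 H1]]. intros j Hj; apply H; lia.
    destruct (H m (Nat.lt_succ_diag_r m)) as [d2 [Hd2 H2]].
    exists (Rmin d1 d2); split. apply Rmin_pos; auto.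
    intros j Hj. destruct (Nat.eq_dec j m) as [->|Hne].
    + apply Hmon with d2; auto. split. apply Rmin_pos; auto. apply Rmin_r.
    + apply Hmon with d1; auto. split. apply Rmin_pos; auto. apply Rmin_l. apply H1; lia.
Qed.

Section Cont.
Variable n : nat.
Variable U : vec -> Prop.

Lemma cont_const c x : cont_on_at n U (fun _ => c) x.
Proof. intros eps He; exists 1; split; [lra|]. intros; rewrite Rminus_diag, Rabs_R0; lra. Qed.

Lemma cont_coord j x : (j < n)%nat -> cont_on_at n U (fun y => y j) x.
Proof. intros Hj eps He; exists eps; split; auto. Qed.

Lemma cont_plus f g x : cont_on_at n U f x -> cont_on_at n U g x ->
  cont_on_at n U (fun y => f y + g y) x.
Proof.
  intros Hf Hg eps He.
  destruct (Hf (eps/2)) as [d1 [Hd1 H1]]; [lra|].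
  destruct (Hg (eps/2)) as [d2 [Hd2 H2]]; [lra|].
  exists (Rmin d1 d2); split. apply Rmin_pos; auto.
  intros y Uy Hy.
  assert (A1 := H1 y Uy (fun j Hj => Rlt_le_trans _ _ _ (Hy j Hj) (Rmin_l _ _))).
  assert (A2 := H2 y Uy (fun j Hj => Rlt_le_trans _ _ _ (Hy j Hj) (Rmin_r _ _))).
  replace (f y + g y - (f x + g x)) with ((f y - f x) + (g y - g x)) by ring.
  eapply Rle_lt_trans. apply Rabs_triang. lra.
Qed.

Lemma cont_mult f g x : cont_on_at n U f x -> cont_on_at n U g x ->
  cont_on_at n U (fun y => f y * g y) x.
Proof.
  intros Hf Hg eps He.
  assert (Pg : 0 < Rabs (g x) + 1) by (pose proof (Rabs_pos (g x)); lra).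
  assert (Pf : 0 < Rabs (f x) + 1) by (pose proof (Rabs_pos (f x)); lra).
  set (e1 := eps / (2 * (Rabs (g x) + 1))).
  set (e2 := Rmin 1 (eps / (2 * (Rabs (f x) + 1)))).
  assert (He1 : 0 < e1) by (apply Rdiv_lt_0_compat; lra).
  assert (He2 : 0 < e2). { apply Rmin_pos; [lra|]. apply Rdiv_lt_0_compat; lra. }
  destruct (Hf e1 He1) as [d1 [Hd1 H1]].
  destruct (Hg e2 He2) as [d2 [Hd2 H2]].
  exists (Rmin d1 d2); split. apply Rmin_pos; auto.
  intros y Uy Hy.
  assert (A1 := H1 y Uy (fun j Hj => Rlt_le_trans _ _ _ (Hy j Hj) (Rmin_l _ _))).
  assert (A2 := H2 y Uy (fun j Hj => Rlt_le_trans _ _ _ (Hy j Hj) (Rmin_r _ _))).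
  replace (f y * g y - f x * g x) with ((f y - f x) * g y + f x * (g y - g x)) by ring.
  eapply Rle_lt_trans. apply Rabs_triang. rewrite !Rabs_mult.
  assert (Hgy : Rabs (g y) <= Rabs (g x) + 1).
  { assert (e2 <= 1) by apply Rmin_l.
    replace (g y) with (g x + (g y - g x)) by ring.
    eapply Rle_trans. apply Rabs_triang. lra. }
  assert (B1 : Rabs (f y - f x) * Rabs (g y) <= e1 * (Rabs (g x) + 1)).
  { apply Rmult_le_compat; try apply Rabs_pos; lra. }
  assert (B2 : Rabs (f x) * Rabs (g y - g x) <= (Rabs (f x) + 1) * e2).
  { apply Rmult_le_compat; try apply Rabs_pos; lra. }
  assert (B3 : e2 <= eps / (2 * (Rabs (f x) + 1))) by apply Rmin_r.
  assert (E1 : e1 * (Rabs (g x) + 1) = eps / 2) by (unfold e1; field; lra).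
  assert (E2 : (Rabs (f x) + 1) * e2 <= eps / 2).
  { apply Rle_trans with ((Rabs (f x) + 1) * (eps / (2 * (Rabs (f x) + 1)))).
    apply Rmult_le_compat_l; lra. right; field; lra. }
  assert (B4 : Rabs (f y - f x) * Rabs (g y) < eps / 2).
  { apply Rle_lt_trans with (Rabs (f y - f x) * (Rabs (g x) + 1)).
    apply Rmult_le_compat_l; [apply Rabs_pos|lra].
    rewrite <- E1. apply Rmult_lt_compat_r; lra. }
  lra.
Qed.

Lemma cont_comp1 G f x : cont_on_at n U f x ->
  (forall eps, 0 < eps -> exists d, 0 < d /\ forall u, Rabs (u - f x) < d -> Rabs (G u - G (f x)) < eps) ->
  cont_on_at n U (fun y => G (f y)) x.
Proof.
  intros Hf HG eps He. destruct (HG eps He) as [d [Hd H]].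
  destruct (Hf d Hd) as [d1 [Hd1 H1]]. exists d1; split; auto.
Qed.

Lemma cont_comp_vec m V F psi x : cont_on_at m V F (psi x) ->
  (forall y, U y -> V (psi y)) ->
  (forall j, (j < m)%nat -> cont_on_at n U (fun y => psi y j) x) ->
  cont_on_at n U (fun y => F (psi y)) x.
Proof.
  intros HF HV Hp eps He. destruct (HF eps He) as [d [Hd H]].
  destruct (fin_min m (fun j e => forall y, U y -> (forall k, (k < n)%nat -> Rabs (y k - x k) < e) ->
     Rabs (psi y j - psi x j) < d)) as [e [He' He2]].
  { intros j a b Hab Ha y Uy Hy. apply Ha; auto. intros k Hk; specialize (Hy k Hk); lra. }
  { intros j Hj. apply (Hp j Hj d Hd). }
  exists e; split; auto.
Qed.
End Cont.

Lemma open_line n U y i : openn n U -> U y -> (i < n)%nat ->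
  exists r, 0 < r /\ forall t, Rabs (t - y i) < r -> U (upd y i t).
Proof.
  intros HU Uy Hi. destruct (HU y Uy) as [r [Hr H]]. exists r; split; auto.
  intros t Ht. apply H. intros j Hj. destruct (Nat.eq_dec j i) as [->|Hne].
  rewrite upd_same; auto. rewrite upd_other; auto. rewrite Rminus_diag, Rabs_R0; auto.
Qed.

Lemma partial_local n U F G y i L : openn n U -> U y -> (i < n)%nat ->
  (forall z, U z -> F z = G z) -> partial_lim i G y L -> partial_lim i F y L.
Proof.
  intros HU Uy Hi Heq H. destruct (open_line n U y i HU Uy Hi) as [r [Hr Hl]].
  unfold partial_lim in *. apply lim_local with (2:=fun t Ht => eq_sym (Heq _ (Hl t Ht))); auto.
Qed.

Definition sclass n (U : vec -> Prop) (P : (vec -> R) -> Prop) :=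
  forall f, P f -> (forall x, U x -> cont_on_at n U f x) /\
    forall i, (i < n)%nat -> exists g, P g /\ forall y, U y -> partial_lim i f y (g y).

Lemma sclass_smooth n U P f : openn n U -> sclass n U P -> P f -> smooth n U f.
Proof.
  intros HU HP Pf.
  assert (Key : forall l, (forall i, List.In i l -> (i < n)%nat) ->
     exists g, P g /\ forall y, U y -> pds l f y = g y).
  { induction l as [|i l IH]; intros Hl.
    - exists f; split; auto.
    - destruct IH as [g [Pg Hg]]. intros j Hj; apply Hl; right; auto.
      destruct (proj2 (HP g Pg) i (Hl i (or_introl eq_refl))) as [g2 [Pg2 Hg2]].
      exists g2; split; auto. intros y Uy. simpl. apply pd_spec.
      apply partial_local with n U g; auto. apply Hl; left; auto. }
  intros l Hl x Ux. destruct (Key l Hl) as [g [Pg Hg]]. split.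
  - destruct (HP g Pg) as [Hc _]. intros eps He. destruct (Hc x Ux eps He) as [d [Hd H]].
    exists d; split; auto. intros y Uy Hy. rewrite !Hg; auto.
  - intros i Hi. destruct (proj2 (HP g Pg) i Hi) as [g2 [Pg2 Hg2]].
    assert (H1 : partial_lim i (pds l f) x (g2 x)).
    { apply partial_local with n U g; auto. }
    rewrite (pd_spec _ _ _ _ H1). exact H1.
Qed.

Definition dep m (F : vec -> R) := forall z z', (forall j, (j < m)%nat -> z j = z' j) -> F z = F z'.

Lemma pd_dep m F i : dep m F -> (i < m)%nat -> dep m (pd i F).
Proof.
  intros HF Hi z z' Hz. unfold pd, partial_lim.
  assert (E : (fun t => F (upd z i t)) = (fun t => F (upd z' i t))).
  { apply functional_extensionality; intro t. apply HF. intros j Hj. unfold upd.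
    destruct (Nat.eqb j i); auto. }
  rewrite E, (Hz i Hi). reflexivity.
Qed.

Lemma pds_dep m F l : dep m F -> (forall i, List.In i l -> (i < m)%nat) -> dep m (pds l F).
Proof.
  intros HF. induction l as [|i l IH]; intros Hl; simpl; auto.
  apply pd_dep. apply IH; intros; apply Hl; right; auto. apply Hl; left; auto.
Qed.

Lemma mvt_bound g g' a b K : (forall v, Rmin a b <= v <= Rmax a b -> derivable_pt_lim g v (g' v) /\ Rabs (g' v) <= K) ->
  Rabs (g b - g a) <= K * Rabs (b - a).
Proof.
  intros H. destruct (Rtotal_order a b) as [Hab|[Hab|Hab]].
  - destruct (MVT_cor2 g g' a b Hab) as [c [Hc Hc2]].
    { intros c Hc. apply H. rewrite Rmin_left, Rmax_right; lra. }
    rewrite Hc, Rabs_mult. apply Rmult_le_compat_r. apply Rabs_pos.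
    apply H. rewrite Rmin_left, Rmax_right; lra.
  - subst. rewrite !Rminus_diag, Rabs_R0, Rmult_0_r; lra.
  - destruct (MVT_cor2 g g' b a Hab) as [c [Hc Hc2]].
    { intros c Hc. apply H. rewrite Rmin_right, Rmax_left; lra. }
    rewrite <- Rabs_Ropp, (Rabs_minus_sym b a).
    replace (- (g b - g a)) with (g a - g b) by ring.
    rewrite Hc, Rabs_mult. apply Rmult_le_compat_r. apply Rabs_pos.
    apply H. rewrite Rmin_right, Rmax_left; lra.
Qed.

Lemma upd_upd_same z k v t : upd (upd z k v) k t = upd z k t.
Proof. apply functional_extensionality; intro m; unfold upd. destruct (Nat.eqb m k); auto. Qed.
Lemma upd_comm z i j a b : i <> j -> upd (upd z i a) j b = upd (upd z j b) i a.
Proof.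
  intro H. apply functional_extensionality; intro m; unfold upd.
  destruct (Nat.eqb_spec m j), (Nat.eqb_spec m i); subst; auto. contradiction.
Qed.
Lemma upd_id z k : upd z k (z k) = z.
Proof. apply functional_extensionality; intro m; unfold upd. destruct (Nat.eqb_spec m k); subst; auto. Qed.

Lemma between_abs a h v : 0 <= h -> Rmin a (a + h) <= v <= Rmax a (a + h) -> Rabs (v - a) <= h.
Proof.
  intros Hh [H1 H2]. rewrite Rmin_left in H1 by lra. rewrite Rmax_right in H2 by lra.
  apply Rabs_le; lra.
Qed.
Lemma between_abs2 a h v : Rmin a (a + h) <= v <= Rmax a (a + h) -> Rabs (v - a) <= Rabs h.
Proof.
  intros [H1 H2]. destruct (Rle_dec 0 h).
  rewrite Rmin_left in H1 by lra. rewrite Rmax_right in H2 by lra. rewrite (Rabs_pos_eq h) by lra. apply Rabs_le; lra.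
  rewrite Rmin_right in H1 by lra. rewrite Rmax_left in H2 by lra. rewrite (Rabs_left h) by lra. apply Rabs_le; lra.
Qed.

Section Chain.
Variables (n : nat) (U : vec -> Prop) (F : vec -> R) (y : vec) (i k : nat) (c : R).
Hypotheses (HU : openn n U) (Uy : U y) (Hik : i <> k) (Hi : (i < n)%nat) (Hk : (k < n)%nat)
  (HFk : forall z, U z -> partial_lim k F z (pd k F z))
  (HFkc : cont_on_at n U (pd k F) y)
  (HFi : partial_lim i F y (pd i F y)).

Lemma chain2 : derivable_pt_lim (fun t => F (upd (upd y i t) k (y k + c * (t - y i)))) (y i)
   (pd i F y + c * pd k F y).
Proof.
  intros eps He.
  set (L1 := pd i F y). set (L2 := pd k F y).
  assert (Pc : 0 < Rabs c + 1) by (pose proof (Rabs_pos c); lra).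
  set (e' := eps / (2 * (Rabs c + 1))).
  assert (He' : 0 < e') by (apply Rdiv_lt_0_compat; lra).
  destruct (HFi (eps/2)) as [d1 Hd1]; [lra|].
  destruct (HFkc e' He') as [d2 [Hd2 H2]].
  destruct (HU y Uy) as [r [Hr Hball]].
  set (dd := Rmin d1 (Rmin (d2 / (Rabs c + 1)) (r / (Rabs c + 1)))).
  assert (Hdd : 0 < dd).
  { apply Rmin_pos. apply cond_pos. apply Rmin_pos; apply Rdiv_lt_0_compat; lra. }
  exists (mkposreal dd Hdd). intros h Hh0 Hh. simpl in Hh.
  assert (Hh1 : Rabs h < d1) by (eapply Rlt_le_trans; [exact Hh|apply Rmin_l]).
  assert (Hh2 : Rabs h * (Rabs c + 1) < d2).
  { assert (Rabs h < d2 / (Rabs c + 1)).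
    { eapply Rlt_le_trans; [exact Hh|]. unfold dd. eapply Rle_trans; [apply Rmin_r|apply Rmin_l]. }
    apply Rmult_lt_compat_r with (r:=Rabs c + 1) in H; auto.
    unfold Rdiv in H. rewrite Rmult_assoc, Rinv_l, Rmult_1_r in H; lra. }
  assert (Hh3 : Rabs h * (Rabs c + 1) < r).
  { assert (Rabs h < r / (Rabs c + 1)).
    { eapply Rlt_le_trans; [exact Hh|]. unfold dd. eapply Rle_trans; [apply Rmin_r|apply Rmin_r]. }
    apply Rmult_lt_compat_r with (r:=Rabs c + 1) in H; auto.
    unfold Rdiv in H. rewrite Rmult_assoc, Rinv_l, Rmult_1_r in H; lra. }
  assert (Hch : Rabs (c * h) <= Rabs h * Rabs c) by (rewrite Rabs_mult; right; ring).
  assert (Hhp : 0 < Rabs h) by (apply Rabs_pos_lt; auto).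
  assert (Hcp := Rabs_pos c).
  replace (y i + h - y i) with h by ring.
  set (q := upd y i (y i + h)).
  assert (Hqk : q k = y k) by (unfold q; rewrite upd_other; auto).
  set (g := fun v => F (upd q k v) - v * L2).
  set (g' := fun v => pd k F (upd q k v) - L2).
  assert (Hpts : forall v, Rabs (v - y k) <= Rabs (c * h) ->
     U (upd q k v) /\ Rabs (pd k F (upd q k v) - L2) < e').
  { intros v Hv.
    assert (Hw : forall j, (j < n)%nat -> Rabs (upd q k v j - y j) <= Rabs h * (Rabs c + 1)).
    { intros j Hj. unfold q, upd. destruct (Nat.eqb_spec j k).
      subst; lra. destruct (Nat.eqb_spec j i). subst. replace (y i + h - y i) with h by ring.
      nra. rewrite Rminus_diag, Rabs_R0. nra. }
    assert (Uq : U (upd q k v)).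
    { apply Hball. intros j Hj. specialize (Hw j Hj); lra. }
    split; auto. apply H2; auto. intros j Hj; specialize (Hw j Hj); lra. }
  assert (Bd : Rabs (g (y k + c * h) - g (y k)) <= e' * Rabs (y k + c * h - y k)).
  { apply mvt_bound with g'. intros v Hv.
    assert (Hv2 := between_abs2 _ _ _ Hv). destruct (Hpts v Hv2) as [Uv Hv3].
    split; [|unfold g'; lra].
    unfold g, g'. apply derivable_pt_lim_minus.
    - assert (HH := HFk _ Uv). unfold partial_lim in HH.
      assert (E : (fun t => F (upd (upd q k v) k t)) = fun t => F (upd q k t))
        by (apply functional_extensionality; intro; rewrite upd_upd_same; auto).
      rewrite E, upd_same in HH. exact HH.
    - assert (HH := derivable_pt_lim_scal_right (fun v => v) v 1 L2 (derivable_pt_lim_id v)).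
      rewrite Rmult_1_l in HH. exact HH. }
  replace (y k + c * h - y k) with (c * h) in Bd by ring.
  unfold g in Bd. assert (Eq : upd q k (y k) = q) by (rewrite <- Hqk; apply upd_id). rewrite Eq in Bd.
  assert (A1 := Hd1 h Hh0 Hh1). fold L1 in A1. fold q in A1.
  rewrite upd_id in A1.
  rewrite (Rminus_diag (y i)), Rmult_0_r, Rplus_0_r, upd_id, upd_id.
  replace ((F (upd q k (y k + c * h)) - F y) / h - (L1 + c * L2))
    with (((F q - F y) / h - L1) + (F (upd q k (y k + c * h)) - (y k + c * h) * L2 - (F q - y k * L2)) / h) by (field; auto).
  eapply Rle_lt_trans. apply Rabs_triang.
  assert (Hsec : Rabs ((F (upd q k (y k + c * h)) - (y k + c * h) * L2 - (F q - y k * L2)) / h) <= e' * Rabs c).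
  { unfold Rdiv. rewrite Rabs_mult, Rabs_inv.
    apply Rmult_le_reg_r with (Rabs h); auto. rewrite Rmult_assoc, Rinv_l, Rmult_1_r by lra.
    eapply Rle_trans. exact Bd. rewrite Rabs_mult. right; ring. }
  assert (He2 : e' * Rabs c < eps / 2).
  { unfold e'. apply Rle_lt_trans with (eps / (2 * (Rabs c + 1)) * (Rabs c + 1) - eps / (2 * (Rabs c + 1))).
    right; ring. replace (eps / (2 * (Rabs c + 1)) * (Rabs c + 1)) with (eps/2) by (field; lra). unfold e' in He'; lra. }
  lra.
Qed.
End Chain.

Section Schwarz.
Variables (n : nat) (U : vec -> Prop) (f : vec -> R) (x : vec).
Hypotheses (HU : openn n U) (Hf : smooth n U f) (Ux : U x).

Definition Delta i j h := f (upd (upd x i (x i + h)) j (x j + h)) - f (upd x i (x i + h))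
   - f (upd x j (x j + h)) + f x.

Lemma schwarz_half i j : (i < n)%nat -> (j < n)%nat -> i <> j ->
  forall eps, 0 < eps -> exists d, 0 < d /\ forall h, 0 < h < d ->
    Rabs (Delta i j h - h * h * pd j (pd i f) x) <= eps * (h * h).
Proof.
  intros Hi Hj Hij eps He.
  assert (S0 : forall z, U z -> forall m, (m < n)%nat -> partial_lim m f z (pd m f z)).
  { intros z Uz m Hm. apply (proj2 (Hf nil (fun _ H => False_ind _ H) z Uz) m Hm). }
  assert (S1 : forall z, U z -> partial_lim j (pd i f) z (pd j (pd i f) z)).
  { intros z Uz. refine (proj2 (Hf (i :: nil) _ z Uz) j Hj).
    intros m [<-|[]]; auto. }
  assert (S2 : cont_on_at n U (pd j (pd i f)) x).
  { refine (proj1 (Hf (j :: i :: nil) _ x Ux)). intros m [<-|[<-|[]]]; auto. }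
  destruct (S2 eps He) as [d2 [Hd2 H2]].
  destruct (HU x Ux) as [r [Hr Hball]].
  exists (Rmin d2 r); split. apply Rmin_pos; auto.
  intros h [Hh0 Hh]. assert (Hhd2 : h < d2) by (eapply Rlt_le_trans; [exact Hh|apply Rmin_l]).
  assert (Hhr : h < r) by (eapply Rlt_le_trans; [exact Hh|apply Rmin_r]).
  assert (Pt : forall u v, Rabs (u - x i) <= h -> Rabs (v - x j) <= h ->
     U (upd (upd x i u) j v) /\ forall m, (m < n)%nat -> Rabs (upd (upd x i u) j v m - x m) < Rmin d2 r).
  { intros u v Hu Hv.
    assert (W : forall m, (m < n)%nat -> Rabs (upd (upd x i u) j v m - x m) < Rmin d2 r).
    { intros m Hm. unfold upd. destruct (Nat.eqb_spec m j). subst; lra.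
      destruct (Nat.eqb_spec m i). subst; lra. rewrite Rminus_diag, Rabs_R0. apply Rmin_pos; auto. }
    split; auto. apply Hball. intros m Hm. specialize (W m Hm).
    eapply Rlt_le_trans; [exact W|apply Rmin_r]. }
  set (phi := fun u => f (upd (upd x i u) j (x j + h)) - f (upd x i u)).
  set (phi' := fun u => pd i f (upd (upd x i u) j (x j + h)) - pd i f (upd x i u)).
  destruct (MVT_cor2 phi phi' (x i) (x i + h)) as [u1 [Hu1 Hu1b]]. lra.
  { intros u Hu. assert (Hu' : Rabs (u - x i) <= h) by (apply Rabs_le; lra).
    assert (Hv' : Rabs (x j + h - x j) <= h) by (replace (x j + h - x j) with h by ring; apply Rabs_le; lra).
    destruct (Pt u (x j + h) Hu' Hv') as [U1 _].
    assert (Hx0 : Rabs (x j - x j) <= h) by (rewrite Rminus_diag, Rabs_R0; lra).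
    destruct (Pt u (x j) Hu' Hx0) as [U2 _].
    rewrite (upd_comm _ i j) in U2 by auto.
    assert (Ej : upd x j (x j) = x) by apply upd_id. rewrite Ej in U2.
    unfold phi, phi'. apply derivable_pt_lim_minus.
    - assert (HH := S0 _ U1 i Hi). unfold partial_lim in HH.
      assert (E : (fun t => f (upd (upd (upd x i u) j (x j + h)) i t)) = fun t => f (upd (upd x i t) j (x j + h))).
      { apply functional_extensionality; intro t. rewrite upd_comm by auto. rewrite upd_upd_same. auto. }
      rewrite E in HH. rewrite upd_other, upd_same in HH by auto. exact HH.
    - assert (HH := S0 _ U2 i Hi). unfold partial_lim in HH.
      assert (E : (fun t => f (upd (upd x i u) i t)) = fun t => f (upd x i t)).
      { apply functional_extensionality; intro t. rewrite upd_upd_same. auto. }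
      rewrite E, upd_same in HH. exact HH. }
  assert (HD : Delta i j h = phi' u1 * h).
  { replace (phi' u1 * h) with (phi' u1 * (x i + h - x i)) by ring. rewrite <- Hu1. unfold phi, Delta. rewrite !upd_id. ring. }
  set (F2 := pd j (pd i f) x).
  set (psi := fun v => pd i f (upd (upd x i u1) j v) - v * F2).
  set (psi' := fun v => pd j (pd i f) (upd (upd x i u1) j v) - F2).
  assert (Hu1a : Rabs (u1 - x i) <= h) by (apply Rabs_le; lra).
  assert (Bd : Rabs (psi (x j + h) - psi (x j)) <= eps * Rabs (x j + h - x j)).
  { apply mvt_bound with psi'. intros v Hv.
    assert (Hv2 : Rabs (v - x j) <= h) by (apply between_abs; lra).
    destruct (Pt u1 v Hu1a Hv2) as [Uv Wv]. split.
    - unfold psi, psi'. apply derivable_pt_lim_minus.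
      + assert (HH := S1 _ Uv). unfold partial_lim in HH.
        assert (E : (fun t => pd i f (upd (upd (upd x i u1) j v) j t)) = fun t => pd i f (upd (upd x i u1) j t)).
        { apply functional_extensionality; intro t. rewrite upd_upd_same. auto. }
        rewrite E, upd_same in HH. exact HH.
      + assert (HH := derivable_pt_lim_scal_right (fun v => v) v 1 F2 (derivable_pt_lim_id v)).
        rewrite Rmult_1_l in HH. exact HH.
    - unfold psi'. left. apply H2; auto. intros m Hm. specialize (Wv m Hm).
      eapply Rlt_le_trans; [exact Wv|apply Rmin_l]. }
  replace (x j + h - x j) with h in Bd by ring.
  assert (Ej : upd (upd x i u1) j (x j) = upd x i u1).
  { assert (HH := upd_id (upd x i u1) j). rewrite upd_other in HH by auto. exact HH. }
  unfold psi in Bd. rewrite Ej in Bd.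
  rewrite HD. fold F2.
  replace (phi' u1 * h - h * h * F2) with (h * (pd i f (upd (upd x i u1) j (x j + h)) - (x j + h) * F2 -
     (pd i f (upd x i u1) - x j * F2))) by (unfold phi'; ring).
  rewrite Rabs_mult, (Rabs_pos_eq h) by lra. rewrite (Rabs_pos_eq h) in Bd by lra.
  replace (eps * (h * h)) with (h * (eps * h)) by ring.
  apply Rmult_le_compat_l; lra.
Qed.

Lemma Delta_sym i j h : i <> j -> Delta i j h = Delta j i h.
Proof. intro H. unfold Delta. rewrite upd_comm by auto. ring. Qed.

End Schwarz.

Lemma schwarz n U f x i j : openn n U -> smooth n U f -> U x -> (i < n)%nat -> (j < n)%nat ->
  pd i (pd j f) x = pd j (pd i f) x.
Proof.
  intros HU Hf Ux Hi Hj. destruct (Nat.eq_dec i j) as [->|Hij]; auto.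
  set (a := pd i (pd j f) x). set (b := pd j (pd i f) x).
  destruct (Req_dec a b) as [|Hne]; auto. exfalso.
  set (eps := Rabs (a - b) / 4).
  assert (He : 0 < eps) by (unfold eps; apply Rdiv_lt_0_compat; [apply Rabs_pos_lt; lra|lra]).
  destruct (schwarz_half n U f x HU Hf Ux i j Hi Hj Hij eps He) as [d1 [Hd1 H1]].
  destruct (schwarz_half n U f x HU Hf Ux j i Hj Hi (not_eq_sym Hij) eps He) as [d2 [Hd2 H2]].
  set (h := Rmin d1 d2 / 2).
  assert (Hm : 0 < Rmin d1 d2) by (apply Rmin_pos; auto).
  assert (Hh1 : 0 < h < d1) by (unfold h; split; [lra|]; pose proof (Rmin_l d1 d2); lra).
  assert (Hh2 : 0 < h < d2) by (unfold h; split; [lra|]; pose proof (Rmin_r d1 d2); lra).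
  specialize (H1 h Hh1). specialize (H2 h Hh2). rewrite Delta_sym in H2 by auto.
  fold b in H1. fold a in H2.
  assert (Hhh : 0 < h * h) by nra.
  assert (Rabs (h * h * (a - b)) <= 2 * eps * (h * h)).
  { replace (h * h * (a - b)) with (- (Delta f x i j h - h * h * a) + (Delta f x i j h - h * h * b)) by ring.
    eapply Rle_trans. apply Rabs_triang. rewrite Rabs_Ropp. lra. }
  rewrite Rabs_mult, (Rabs_pos_eq (h*h)) in H by lra.
  unfold eps in H. assert (0 < Rabs (a - b)) by (apply Rabs_pos_lt; lra). nra.
Qed.

Lemma dplus f g x l1 l2 : derivable_pt_lim f x l1 -> derivable_pt_lim g x l2 ->
  derivable_pt_lim (fun t => f t + g t) x (l1 + l2).
Proof. intros; apply derivable_pt_lim_plus; auto. Qed.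
Lemma dmult f g x l1 l2 : derivable_pt_lim f x l1 -> derivable_pt_lim g x l2 ->
  derivable_pt_lim (fun t => f t * g t) x (l1 * g x + f x * l2).
Proof. intros; apply derivable_pt_lim_mult; auto. Qed.

Lemma pval j F x L L' : partial_lim j F x L -> L = L' -> partial_lim j F x L'.
Proof. intros H ->; auto. Qed.
Lemma pext j F G x L : (forall t, F (upd x j t) = G (upd x j t)) -> partial_lim j G x L -> partial_lim j F x L.
Proof.
  intros H HG. unfold partial_lim in *.
  assert (E : (fun t => F (upd x j t)) = (fun t => G (upd x j t))) by (apply functional_extensionality; auto).
  rewrite E; auto.
Qed.
Lemma pplus j F G x L1 L2 : partial_lim j F x L1 -> partial_lim j G x L2 ->
  partial_lim j (fun y => F y + G y) x (L1 + L2).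
Proof. unfold partial_lim; intros; apply dplus with (f := fun t => F (upd x j t)) (g := fun t => G (upd x j t)); auto. Qed.
Lemma pmult j F G x L1 L2 : partial_lim j F x L1 -> partial_lim j G x L2 ->
  partial_lim j (fun y => F y * G y) x (L1 * G x + F x * L2).
Proof.
  unfold partial_lim; intros H1 H2.
  assert (HH := dmult (fun t => F (upd x j t)) (fun t => G (upd x j t)) _ _ _ H1 H2).
  simpl in HH. rewrite upd_id in HH. exact HH.
Qed.
Lemma pconst j c x : partial_lim j (fun _ => c) x 0.
Proof. unfold partial_lim. apply derivable_pt_lim_const. Qed.
Lemma pcoord j m x : partial_lim j (fun y => y m) x (if Nat.eqb m j then 1 else 0).
Proof.
  unfold partial_lim, upd. destruct (Nat.eqb m j). apply derivable_pt_lim_id. apply derivable_pt_lim_const.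
Qed.

Definition cc (j : nat) (x : vec) : R :=
  match j with 0 => x 3%nat | 1 => x 4%nat | 2 => x 5%nat | 3 => x 0%nat | 4 => x 1%nat | 5 => x 2%nat | _ => 0 end.

Lemma sM_upd x j t : (j < 6)%nat -> sM (upd x j t) = sM x + cc j x * (t - x j).
Proof.
  intro Hj. do 6 (destruct j as [|j]; [unfold sM, upd, cc; simpl; ring|]). lia.
Qed.

Lemma lin_deriv a c b t0 : derivable_pt_lim (fun t => a + c * (t - b)) t0 c.
Proof.
  intros eps He. exists (mkposreal 1 Rlt_0_1). intros h Hh _.
  replace ((a + c * (t0 + h - b) - (a + c * (t0 - b))) / h - c) with 0 by (field; auto).
  rewrite Rabs_R0; auto.
Qed.

Lemma part_sM G x j L : (j < 6)%nat -> derivable_pt_lim G (sM x) L ->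
  partial_lim j (fun y => G (sM y)) x (L * cc j x).
Proof.
  intros Hj HL. unfold partial_lim.
  assert (E : (fun t => G (sM (upd x j t))) = comp G (fun t => sM x + cc j x * (t - x j))).
  { apply functional_extensionality; intro t. unfold comp. rewrite sM_upd; auto. }
  rewrite E. apply derivable_pt_lim_comp. apply lin_deriv.
  replace (sM x + cc j x * (x j - x j)) with (sM x) by ring. exact HL.
Qed.

Definition P3 (x : vec) : vec := mk3 (x 3%nat) (x 4%nat) (x 5%nat).
Definition dP3 (F : vec -> R) (j : nat) (x : vec) : R :=
  match j with 3 => pd 0 F (P3 x) | 4 => pd 1 F (P3 x) | 5 => pd 2 F (P3 x) | _ => 0 end.

Lemma part_P3 F x j : dep 3 F -> (j < 6)%nat ->
  (forall k, (k < 3)%nat -> partial_lim k F (P3 x) (pd k F (P3 x))) ->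
  partial_lim j (fun y => F (P3 y)) x (dP3 F j x).
Proof.
  intros HF Hj HP.
  do 3 (destruct j as [|j]; [unfold partial_lim, P3, dP3, upd; simpl; apply derivable_pt_lim_const|]).
  destruct j as [|j]; [|destruct j as [|j]; [|destruct j as [|j]; [|lia]]].
  - apply pext with (fun y => F (upd (P3 x) 0 (y 3%nat))).
    { intros t. apply HF. intros m Hm. unfold P3, upd, mk3; simpl.
      destruct m as [|[|[|m]]]; simpl; auto; lia. }
    specialize (HP 0%nat ltac:(lia)). unfold partial_lim in *. simpl. exact HP.
  - apply pext with (fun y => F (upd (P3 x) 1 (y 4%nat))).
    { intros t. apply HF. intros m Hm. unfold P3, upd, mk3; simpl.
      destruct m as [|[|[|m]]]; simpl; auto; lia. }
    specialize (HP 1%nat ltac:(lia)). unfold partial_lim in *. simpl. exact HP.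
  - apply pext with (fun y => F (upd (P3 x) 2 (y 5%nat))).
    { intros t. apply HF. intros m Hm. unfold P3, upd, mk3; simpl.
      destruct m as [|[|[|m]]]; simpl; auto; lia. }
    specialize (HP 2%nat ltac:(lia)). unfold partial_lim in *. simpl. exact HP.
Qed.

Section Prob.
Variables (DD : R -> R -> R -> Prop) (II : R -> Prop)
  (a : R -> R) (b : R -> R -> R -> R -> R) (phi : R -> R -> R -> R).

Definition Phi : vec -> R := fun y => phi (y 0%nat) (y 1%nat) (y 2%nat).
Definition Fa : vec -> R := fun y => a (y 0%nat).
Definition Fb : vec -> R := fun y => b (y 0%nat) (y 1%nat) (y 2%nat) (y 3%nat).
Definition D3 : vec -> Prop := fun y => DD (y 0%nat) (y 1%nat) (y 2%nat).
Definition I1 : vec -> Prop := fun y => II (y 0%nat).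
Definition V4 : vec -> Prop := fun y => DD (y 0%nat) (y 1%nat) (y 2%nat) /\ II (y 3%nat).
Definition Om : vec -> Prop := fun x => DD (x 3%nat) (x 4%nat) (x 5%nat) /\ II (sM x).

Hypotheses (HDopen : openn 3 D3) (HIopen : openn 1 I1)
  (Ha : smooth 1 I1 Fa) (Ha0 : forall s, II s -> a s <> 0)
  (Hb : smooth 4 V4 Fb) (Hphi : smooth 3 D3 Phi).

Definition P4 (x : vec) : vec := fun m => match m with 0 => x 3%nat | 1 => x 4%nat | 2 => x 5%nat | _ => sM x end.
Definition dB (j : nat) (x : vec) : R :=
  match j with 3 => pd 0 Fb (P4 x) | 4 => pd 1 Fb (P4 x) | 5 => pd 2 Fb (P4 x) | _ => 0 end
  + pd 3 Fb (P4 x) * cc j x.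
Definition ad (s : R) : R := pd 0 Fa (fun _ => s).

Lemma cont_sM U x : cont_on_at 6 U sM x.
Proof.
  unfold sM. repeat apply cont_plus; apply cont_mult; apply cont_coord; lia.
Qed.

Lemma open_V4 : openn 4 V4.
Proof.
  intros y [Hd Hi]. destruct (HDopen y Hd) as [r1 [Hr1 H1]].
  destruct (HIopen (fun _ => y 3%nat) Hi) as [r2 [Hr2 H2]].
  exists (Rmin r1 r2); split. apply Rmin_pos; auto.
  intros z Hz. split.
  - apply H1. intros j Hj. eapply Rlt_le_trans. apply Hz; lia. apply Rmin_l.
  - apply (H2 (fun _ => z 3%nat)). intros j Hj. eapply Rlt_le_trans. apply Hz; lia. apply Rmin_r.
Qed.

Lemma open_Om : openn 6 Om.
Proof.
  intros x [Hd Hi]. destruct (HDopen (P3 x) Hd) as [r1 [Hr1 H1]].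
  destruct (HIopen (fun _ => sM x) Hi) as [r2 [Hr2 H2]].
  destruct (cont_sM (fun _ => True) x r2 Hr2) as [d [Hd0 Hd1]].
  exists (Rmin r1 d); split. apply Rmin_pos; auto.
  intros z Hz. split.
  - apply (H1 (P3 z)). intros j Hj. unfold P3, mk3.
    destruct j as [|[|[|j]]]; [| | |lia]; eapply Rlt_le_trans; try (apply Hz; lia); apply Rmin_l.
  - apply (H2 (fun _ => sM z)). intros j Hj. apply Hd1; auto. intros m Hm.
    eapply Rlt_le_trans. apply Hz; auto. apply Rmin_r.
Qed.

Lemma a_deriv s : II s -> derivable_pt_lim a s (ad s).
Proof.
  intro Hs. assert (H := proj2 (Ha nil (fun _ H => False_ind _ H) (fun _ => s) Hs) 0%nat ltac:(lia)).
  unfold partial_lim, upd in H. simpl in H. exact H.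
Qed.

Lemma Phi_dep : dep 3 Phi.
Proof.
  intros z z' H. unfold Phi. rewrite (H 0%nat), (H 1%nat), (H 2%nat); auto; lia.
Qed.

Lemma part_B x j : Om x -> (j < 6)%nat ->
  partial_lim j (fun y => b (y 3%nat) (y 4%nat) (y 5%nat) (sM y)) x (dB j x).
Proof.
  intros [Hd Hi] Hj.
  assert (VP : V4 (P4 x)) by (split; auto).
  assert (HFk : forall z, V4 z -> partial_lim 3 Fb z (pd 3 Fb z)).
  { intros z Hz. exact (proj2 (Hb nil (fun _ H => False_ind _ H) z Hz) 3%nat ltac:(lia)). }
  assert (HFi : forall m, (m < 4)%nat -> partial_lim m Fb (P4 x) (pd m Fb (P4 x))).
  { intros m Hm. exact (proj2 (Hb nil (fun _ H => False_ind _ H) _ VP) m Hm). }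
  assert (HFkc : cont_on_at 4 V4 (pd 3 Fb) (P4 x)).
  { refine (proj1 (Hb [3%nat] _ _ VP)). intros m [<-|[]]; lia. }
  assert (H3 : derivable_pt_lim (fun u => Fb (upd (P4 x) 3 u)) (sM x) (pd 3 Fb (P4 x))).
  { specialize (HFi 3%nat ltac:(lia)). unfold partial_lim in HFi. exact HFi. }
  destruct j as [|[|[|j]]].
  1-3: apply pext with (fun y => Fb (upd (P4 x) 3 (sM y)));
    [intro t; unfold Fb, upd, P4; simpl; reflexivity|];
    eapply pval; [apply (part_sM (fun u => Fb (upd (P4 x) 3 u)) x); [lia|exact H3]|unfold dB; simpl; ring].
  destruct j as [|[|[|j]]]; [| | |lia].
  - assert (HC := chain2 4 V4 Fb (P4 x) 0 3 (x 0%nat) open_V4 VP ltac:(lia)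
       HFk HFkc (HFi 0%nat ltac:(lia))).
    eapply pval. unfold partial_lim.
    assert (E : (fun t => b (upd x 3 t 3%nat) (upd x 3 t 4%nat) (upd x 3 t 5%nat) (sM (upd x 3 t))) =
       (fun t => Fb (upd (upd (P4 x) 0 t) 3 (P4 x 3%nat + x 0%nat * (t - P4 x 0%nat))))).
    { apply functional_extensionality; intro t. rewrite sM_upd by lia. unfold Fb, upd, P4, cc; simpl. reflexivity. }
    rewrite E. exact HC. unfold dB, cc; simpl; ring.
  - assert (HC := chain2 4 V4 Fb (P4 x) 1 3 (x 1%nat) open_V4 VP ltac:(lia)
       HFk HFkc (HFi 1%nat ltac:(lia))).
    eapply pval. unfold partial_lim.
    assert (E : (fun t => b (upd x 4 t 3%nat) (upd x 4 t 4%nat) (upd x 4 t 5%nat) (sM (upd x 4 t))) =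
       (fun t => Fb (upd (upd (P4 x) 1 t) 3 (P4 x 3%nat + x 1%nat * (t - P4 x 1%nat))))).
    { apply functional_extensionality; intro t. rewrite sM_upd by lia. unfold Fb, upd, P4, cc; simpl. reflexivity. }
    rewrite E. exact HC. unfold dB, cc; simpl; ring.
  - assert (HC := chain2 4 V4 Fb (P4 x) 2 3 (x 2%nat) open_V4 VP ltac:(lia)
       HFk HFkc (HFi 2%nat ltac:(lia))).
    eapply pval. unfold partial_lim.
    assert (E : (fun t => b (upd x 5 t 3%nat) (upd x 5 t 4%nat) (upd x 5 t 5%nat) (sM (upd x 5 t))) =
       (fun t => Fb (upd (upd (P4 x) 2 t) 3 (P4 x 3%nat + x 2%nat * (t - P4 x 2%nat))))).
    { apply functional_extensionality; intro t. rewrite sM_upd by lia. unfold Fb, upd, P4, cc; simpl. reflexivity. }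
    rewrite E. exact HC. unfold dB, cc; simpl; ring.
Qed.

Definition dmu (k j : nat) (x : vec) : R :=
  (ad (sM x) * cc j x * gradphi phi k (x 3%nat) (x 4%nat) (x 5%nat) + a (sM x) * dP3 (pd k Phi) j x)
  + (dB j x * x (3 + k)%nat + b (x 3%nat) (x 4%nat) (x 5%nat) (sM x) * (if Nat.eqb (3 + k) j then 1 else 0)).

Lemma part_mu x k j : Om x -> (k < 3)%nat -> (j < 6)%nat -> partial_lim j (mu a b phi k) x (dmu k j x).
Proof.
  intros Hx Hk Hj. unfold mu, dmu. apply pplus; apply pmult.
  - apply (part_sM a x j _ Hj). apply a_deriv. apply Hx.
  - assert (HD3 : D3 (P3 x)) by apply Hx.
    assert (Hl : forall i, In i [k] -> (i < 3)%nat) by (intros i [<-|[]]; auto).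
    exact (part_P3 (pd k Phi) x j (pd_dep 3 Phi k Phi_dep Hk) Hj
      (fun m Hm => proj2 (Hphi [k] Hl (P3 x) HD3) m Hm)).
  - apply part_B; auto.
  - apply pcoord.
Qed.

End Prob.

Lemma popp j F x L : partial_lim j F x L -> partial_lim j (fun y => - F y) x (- L).
Proof. unfold partial_lim; intro H. apply derivable_pt_lim_opp with (f := fun t => F (upd x j t)); auto. Qed.

Lemma prsum n j x (F : nat -> vec -> R) (L : nat -> R) :
  (forall i, (i < n)%nat -> partial_lim j (F i) x (L i)) ->
  partial_lim j (fun y => rsum n (fun i => F i y)) x (rsum n L).
Proof.
  induction n as [|n IH]; intros H; simpl.
  - apply pconst.
  - apply pplus. apply IH; intros; apply H; lia. apply H; lia.
Qed.

Lemma rsum_ext n F G : (forall i, (i < n)%nat -> F i = G i) -> rsum n F = rsum n G.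
Proof.
  induction n as [|n IH]; intros H; simpl; auto. rewrite IH, H; auto; intros; apply H; lia.
Qed.

Section Prob2.
Variables (DD : R -> R -> R -> Prop) (II : R -> Prop)
  (a : R -> R) (b : R -> R -> R -> R -> R) (phi : R -> R -> R -> R).
Hypotheses (HDopen : openn 3 (D3 DD)) (HIopen : openn 1 (I1 II))
  (Ha : smooth 1 (I1 II) (Fa a)) (Ha0 : forall s, II s -> a s <> 0)
  (Hb : smooth 4 (V4 DD II) (Fb b)) (Hphi : smooth 3 (D3 DD) (Phi phi)).

Notation m := (mu a b phi).
Definition dG (n j : nat) : R := if Nat.eqb n j then 1 else 0.
Definition dM (n j : nat) (x : vec) : R := dG n j + dmu a b phi n j x.

Definition dPi (j : nat) (x : vec) (i k : nat) : R :=
  let M1 := dM 0 j x in let M2 := dM 1 j x in let M3 := dM 2 j x in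
  let g1 := dG 3 j in let g2 := dG 4 j in let g3 := dG 5 j in
  match i, k with
  | 0%nat, 1%nat => - M3 | 0%nat, 2%nat => M2 | 0%nat, 4%nat => - g3 | 0%nat, 5%nat => g2
  | 1%nat, 0%nat => M3 | 1%nat, 2%nat => - M1 | 1%nat, 3%nat => g3 | 1%nat, 5%nat => - g1
  | 2%nat, 0%nat => - M2 | 2%nat, 1%nat => M1 | 2%nat, 3%nat => - g2 | 2%nat, 4%nat => g1
  | 3%nat, 1%nat => - g3 | 3%nat, 2%nat => g2
  | 4%nat, 0%nat => g3 | 4%nat, 2%nat => - g1
  | 5%nat, 0%nat => - g2 | 5%nat, 1%nat => g1
  | _, _ => 0
  end.

Lemma pM x n j : Om DD II x -> (n < 3)%nat -> (j < 6)%nat ->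
  partial_lim j (fun y => y n + m n y) x (dM n j x).
Proof.
  intros Hx Hn Hj. apply pplus. apply pcoord. eapply part_mu; eauto.
Qed.

Lemma part_Pi x j i k : Om DD II x -> (j < 6)%nat ->
  partial_lim j (fun y => Pi m y i k) x (dPi j x i k).
Proof.
  intros Hx Hj.
  destruct i as [|[|[|[|[|[|i]]]]]]; destruct k as [|[|[|[|[|[|k]]]]]];
  unfold Pi, dPi; cbv zeta;
  first [ apply pconst
        | apply popp; apply pM; auto; lia
        | apply pM; auto; lia
        | apply popp; apply pcoord
        | apply pcoord ].
Qed.

Definition DBr (g h : vec -> R) (j : nat) (x : vec) : R :=
  rsum 6 (fun i => rsum 6 (fun k =>
    pd j (pd i g) x * Pi m x i k * pd k h x + pd i g x * dPi j x i k * pd k h x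
    + pd i g x * Pi m x i k * pd j (pd k h) x)).

Lemma part_bracket g h x j : Om DD II x -> (j < 6)%nat -> smooth 6 (Om DD II) g -> smooth 6 (Om DD II) h ->
  partial_lim j (bracket m g h) x (DBr g h j x).
Proof.
  intros Hx Hj Hg Hh.
  refine (prsum 6 j x (fun i y => rsum 6 (fun k => pd i g y * Pi m y i k * pd k h y)) _ _).
  intros i Hi.
  refine (prsum 6 j x (fun k y => pd i g y * Pi m y i k * pd k h y) _ _).
  intros k Hk.
  assert (G1 : partial_lim j (pd i g) x (pd j (pd i g) x)).
  { refine (proj2 (Hg [i] _ x Hx) j Hj). intros q [<-|[]]; auto. }
  assert (H1 : partial_lim j (pd k h) x (pd j (pd k h) x)).
  { refine (proj2 (Hh [k] _ x Hx) j Hj). intros q [<-|[]]; auto. }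
  eapply pval.
  { apply pmult. apply pmult. exact G1. apply part_Pi; auto. exact H1. }
  cbv beta. ring.
Qed.

End Prob2.

Section Prob3.
Variables (DD : R -> R -> R -> Prop) (II : R -> Prop)
  (a : R -> R) (b : R -> R -> R -> R -> R) (phi : R -> R -> R -> R).
Hypotheses (HDopen : openn 3 (D3 DD)) (HIopen : openn 1 (I1 II))
  (Ha : smooth 1 (I1 II) (Fa a)) (Ha0 : forall s, II s -> a s <> 0)
  (Hb : smooth 4 (V4 DD II) (Fb b)) (Hphi : smooth 3 (D3 DD) (Phi phi)).

Notation m := (mu a b phi).

Lemma nested f g h x : Om DD II x -> smooth 6 (Om DD II) g -> smooth 6 (Om DD II) h ->
  bracket m f (bracket m g h) x =
  rsum 6 (fun i => rsum 6 (fun k => pd i f x * Pi m x i k * DBr a b phi g h k x)).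
Proof.
  intros Hx Hg Hh. unfold bracket at 1.
  apply rsum_ext; intros i Hi. apply rsum_ext; intros k Hk.
  rewrite (pd_spec _ _ _ _ (part_bracket DD II a b phi HDopen HIopen Ha Hb Hphi g h x k Hx Hk Hg Hh)).
  reflexivity.
Qed.

End Prob3.

Section Prob5.
Variables (DD : R -> R -> R -> Prop) (II : R -> Prop)
  (a : R -> R) (b : R -> R -> R -> R -> R) (phi : R -> R -> R -> R).
Notation m := (mu a b phi).

Definition Tt (x : vec) (i p q : nat) : R :=
  rsum 6 (fun k => Pi m x i k * dPi a b phi k x p q + Pi m x p k * dPi a b phi k x q i + Pi m x q k * dPi a b phi k x i p).

Lemma Tzero x i p q : 
  pd 1 (pd 0 (Phi phi)) (P3 x) = pd 0 (pd 1 (Phi phi)) (P3 x) ->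
  pd 2 (pd 0 (Phi phi)) (P3 x) = pd 0 (pd 2 (Phi phi)) (P3 x) ->
  pd 2 (pd 1 (Phi phi)) (P3 x) = pd 1 (pd 2 (Phi phi)) (P3 x) ->
  (i < 6)%nat -> (p < 6)%nat -> (q < 6)%nat -> Tt x i p q = 0.
Proof.
  intros S1 S2 S3 Hi Hp Hq. unfold Tt.
  destruct i as [|[|[|[|[|[|i]]]]]]; try lia;
  destruct p as [|[|[|[|[|[|p]]]]]]; try lia;
  destruct q as [|[|[|[|[|[|q]]]]]]; try lia;
  cbv beta iota zeta delta [rsum Pi dPi dM dG dmu dB dP3 cc mu Nat.eqb Nat.add];
  rewrite ?S1, ?S2, ?S3; ring.
Qed.
End Prob5.

Lemma rsum_plus n f g : rsum n (fun i => f i + g i) = rsum n f + rsum n g.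
Proof. induction n as [|n IH]; simpl. ring. rewrite IH; ring. Qed.
Lemma rsum_mul_l n c f : c * rsum n f = rsum n (fun i => c * f i).
Proof. induction n as [|n IH]; simpl. ring. rewrite <- IH; ring. Qed.
Lemma rsum_swap n m (F : nat -> nat -> R) :
  rsum n (fun i => rsum m (fun j => F i j)) = rsum m (fun j => rsum n (fun i => F i j)).
Proof.
  induction n as [|n IH]; simpl.
  - induction m as [|m IHm]; simpl; auto. rewrite <- IHm; ring.
  - rewrite IH. rewrite <- rsum_plus. reflexivity.
Qed.
Lemma rsum_zero n f : (forall i, (i < n)%nat -> f i = 0) -> rsum n f = 0.
Proof. intro H. induction n as [|n IH]; simpl; auto. rewrite IH, H; try ring; auto. Qed.

Section Abs.
Variable n : nat.
Definition S4 (F : nat -> nat -> nat -> nat -> R) : R :=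
  rsum n (fun a => rsum n (fun b => rsum n (fun c => rsum n (fun d => F a b c d)))).

Lemma S4_ext F G : (forall a b c d, (a < n)%nat -> (b < n)%nat -> (c < n)%nat -> (d < n)%nat -> F a b c d = G a b c d) ->
  S4 F = S4 G.
Proof.
  intro H. unfold S4. apply rsum_ext; intros. apply rsum_ext; intros. apply rsum_ext; intros.
  apply rsum_ext; intros. auto.
Qed.
Lemma S4_plus F G : S4 (fun a b c d => F a b c d + G a b c d) = S4 F + S4 G.
Proof.
  unfold S4. rewrite <- rsum_plus. apply rsum_ext; intros. rewrite <- rsum_plus.
  apply rsum_ext; intros. rewrite <- rsum_plus. apply rsum_ext; intros. apply rsum_plus.
Qed.
Lemma sw12 F : S4 F = S4 (fun a b c d => F b a c d).
Proof. unfold S4. apply rsum_swap. Qed.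
Lemma sw23 F : S4 F = S4 (fun a b c d => F a c b d).
Proof. unfold S4. apply rsum_ext; intros. apply rsum_swap. Qed.
Lemma sw34 F : S4 F = S4 (fun a b c d => F a b d c).
Proof. unfold S4. apply rsum_ext; intros. apply rsum_ext; intros. apply rsum_swap. Qed.

Ltac chain := repeat (etransitivity; [first [apply sw12|apply sw23|apply sw34]|]); reflexivity.

Lemma s1 F : S4 F = S4 (fun a b c d => F a d b c).
Proof. etransitivity; [apply sw23|]. etransitivity; [apply sw34|]. reflexivity. Qed.
Lemma s2 F : S4 F = S4 (fun a b c d => F b d c a).
Proof. etransitivity; [apply sw23|]. etransitivity; [apply sw34|]. etransitivity; [apply sw23|].
  etransitivity; [apply sw12|]. reflexivity. Qed.
Lemma s3 F : S4 F = S4 (fun a b c d => F c d a b).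
Proof. etransitivity; [apply sw23|]. etransitivity; [apply sw12|]. etransitivity; [apply sw34|].
  etransitivity; [apply sw23|]. reflexivity. Qed.
Lemma s4 F : S4 F = S4 (fun a b c d => F d c a b).
Proof. etransitivity; [apply sw12|]. etransitivity; [apply sw23|]. etransitivity; [apply sw12|].
  etransitivity; [apply sw34|]. etransitivity; [apply sw23|]. reflexivity. Qed.

Variables (P : nat -> nat -> R) (dP : nat -> nat -> nat -> R).

Definition DA (Y1 : nat -> R) (Y2 : nat -> nat -> R) (Z1 : nat -> R) (Z2 : nat -> nat -> R) (k : nat) : R :=
  rsum n (fun p => rsum n (fun q => Y2 k p * P p q * Z1 q + Y1 p * dP k p q * Z1 q + Y1 p * P p q * Z2 k q)).
Definition JA X1 Y1 Y2 Z1 Z2 : R := rsum n (fun i => rsum n (fun k => X1 i * P i k * DA Y1 Y2 Z1 Z2 k)).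

Lemma JA_split X1 Y1 Y2 Z1 Z2 : JA X1 Y1 Y2 Z1 Z2 =
  S4 (fun i k p q => X1 i * P i k * (Y2 k p * P p q * Z1 q))
  + S4 (fun i k p q => X1 i * P i k * (Y1 p * dP k p q * Z1 q))
  + S4 (fun i k p q => X1 i * P i k * (Y1 p * P p q * Z2 k q)).
Proof.
  rewrite <- !S4_plus. unfold JA, DA, S4. apply rsum_ext; intros. apply rsum_ext; intros.
  rewrite rsum_mul_l. apply rsum_ext; intros. rewrite rsum_mul_l. apply rsum_ext; intros. ring.
Qed.

Hypothesis skew : forall i j, (i < n)%nat -> (j < n)%nat -> P i j = - P j i.
Hypothesis Tz : forall a b c, (a < n)%nat -> (b < n)%nat -> (c < n)%nat ->
  rsum n (fun k => P a k * dP k b c + P b k * dP k c a + P c k * dP k a b) = 0.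

Lemma hess_cancel X1 Y2 Z1 : (forall i j, (i < n)%nat -> (j < n)%nat -> Y2 i j = Y2 j i) ->
  S4 (fun i k p q => X1 i * P i k * (Y2 k p * P p q * Z1 q))
  + S4 (fun i k p q => Z1 i * P i k * (X1 p * P p q * Y2 k q)) = 0.
Proof.
  intro Hs. rewrite (s4 (fun i k p q => Z1 i * P i k * (X1 p * P p q * Y2 k q))).
  rewrite <- S4_plus. unfold S4.
  apply rsum_zero; intros. apply rsum_zero; intros. apply rsum_zero; intros. apply rsum_zero; intros.
  rewrite (skew i2 i1), (Hs i1 i0); auto. ring.
Qed.

Lemma dP_sum X1 Y1 Z1 :
  S4 (fun i k p q => X1 i * P i k * (Y1 p * dP k p q * Z1 q))
  + S4 (fun i k p q => Y1 i * P i k * (Z1 p * dP k p q * X1 q))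
  + S4 (fun i k p q => Z1 i * P i k * (X1 p * dP k p q * Y1 q)) = 0.
Proof.
  rewrite (s1 (fun i k p q => X1 i * P i k * (Y1 p * dP k p q * Z1 q))).
  rewrite (s2 (fun i k p q => Y1 i * P i k * (Z1 p * dP k p q * X1 q))).
  rewrite (s3 (fun i k p q => Z1 i * P i k * (X1 p * dP k p q * Y1 q))).
  rewrite <- !S4_plus. unfold S4.
  apply rsum_zero; intros. apply rsum_zero; intros. apply rsum_zero; intros.
  transitivity (X1 i * Y1 i0 * Z1 i1 * rsum n (fun k => P i k * dP k i0 i1 + P i0 k * dP k i1 i + P i1 k * dP k i i0)).
  rewrite rsum_mul_l. apply rsum_ext; intros. ring.
  rewrite Tz; auto. ring.
Qed.

Lemma abstract_jacobi F1 F2 G1 G2 H1 H2 :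
  (forall i j, (i < n)%nat -> (j < n)%nat -> F2 i j = F2 j i) ->
  (forall i j, (i < n)%nat -> (j < n)%nat -> G2 i j = G2 j i) ->
  (forall i j, (i < n)%nat -> (j < n)%nat -> H2 i j = H2 j i) ->
  JA F1 G1 G2 H1 H2 + JA G1 H1 H2 F1 F2 + JA H1 F1 F2 G1 G2 = 0.
Proof.
  intros SF SG SH. rewrite !JA_split.
  assert (E1 := hess_cancel F1 G2 H1 SG).
  assert (E2 := hess_cancel G1 H2 F1 SH).
  assert (E3 := hess_cancel H1 F2 G1 SF).
  assert (E4 := dP_sum F1 G1 H1).
  lra.
Qed.
End Abs.

Section Prob4.
Variables (DD : R -> R -> R -> Prop) (II : R -> Prop)
  (a : R -> R) (b : R -> R -> R -> R -> R) (phi : R -> R -> R -> R).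
Hypotheses (HDopen : openn 3 (D3 DD)) (HIopen : openn 1 (I1 II))
  (Ha : smooth 1 (I1 II) (Fa a)) (Ha0 : forall s, II s -> a s <> 0)
  (Hb : smooth 4 (V4 DD II) (Fb b)) (Hphi : smooth 3 (D3 DD) (Phi phi)).

Notation m := (mu a b phi).

Lemma Pi_skew x i j : Pi m x i j = - Pi m x j i.
Proof.
  destruct i as [|[|[|[|[|[|i]]]]]]; destruct j as [|[|[|[|[|[|j]]]]]]; unfold Pi; cbv zeta; ring.
Qed.

Lemma jacobi f g h x : smooth 6 (Om DD II) f -> smooth 6 (Om DD II) g -> smooth 6 (Om DD II) h -> Om DD II x ->
  bracket m f (bracket m g h) x + bracket m g (bracket m h f) x + bracket m h (bracket m f g) x = 0.
Proof.
  intros Hf Hg Hh Hx.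
  rewrite !(nested DD II a b phi HDopen HIopen Ha Hb Hphi) by auto.
  assert (HO := open_Om DD II HDopen HIopen).
  assert (HD3 : D3 DD (P3 x)) by apply Hx.
  assert (Sphi : forall i j, (i < 3)%nat -> (j < 3)%nat -> pd i (pd j (Phi phi)) (P3 x) = pd j (pd i (Phi phi)) (P3 x)).
  { intros; apply (schwarz 3 (D3 DD)); auto. }
  assert (Tz : forall i p q, (i < 6)%nat -> (p < 6)%nat -> (q < 6)%nat ->
     rsum 6 (fun k => Pi m x i k * dPi a b phi k x p q + Pi m x p k * dPi a b phi k x q i
        + Pi m x q k * dPi a b phi k x i p) = 0).
  { intros i p q Hi Hp Hq. apply (Tzero a b phi x i p q); auto; apply Sphi; lia. }
  apply (abstract_jacobi 6 (Pi m x) (fun k i j => dPi a b phi k x i j)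
     (fun i j _ _ => Pi_skew x i j) Tz
     (fun i => pd i f x) (fun i j => pd i (pd j f) x)
     (fun i => pd i g x) (fun i j => pd i (pd j g) x)
     (fun i => pd i h x) (fun i j => pd i (pd j h) x)).
  all: intros i j Hi Hj; apply (schwarz 6 (Om DD II)); auto.
Qed.
End Prob4.

Section Cas.
Variables (DD : R -> R -> R -> Prop) (II : R -> Prop)
  (a : R -> R) (b : R -> R -> R -> R -> R) (phi : R -> R -> R -> R) (AA : R -> R).
Hypotheses (HDopen : openn 3 (D3 DD)) (HIopen : openn 1 (I1 II))
  (Ha : smooth 1 (I1 II) (Fa a)) (Ha0 : forall s, II s -> a s <> 0)
  (Hb : smooth 4 (V4 DD II) (Fb b)) (Hphi : smooth 3 (D3 DD) (Phi phi))
  (HA : forall s, II s -> derivable_pt_lim AA s (/ a s)).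

Definition da (k : nat) (s : R) : R := pds (repeat 0%nat k) (Fa a) (fun _ => s).

Inductive Q : (R -> R) -> Prop :=
| Q_A : Q AA
| Q_inv : Q (fun s => / a s)
| Q_da k : Q (da k)
| Q_const c : Q (fun _ => c)
| Q_plus G1 G2 : Q G1 -> Q G2 -> Q (fun s => G1 s + G2 s)
| Q_mult G1 G2 : Q G1 -> Q G2 -> Q (fun s => G1 s * G2 s).

Lemma da_deriv k s : II s -> derivable_pt_lim (da k) s (da (S k) s).
Proof.
  intro Hs.
  assert (Hl : forall i, In i (repeat 0%nat k) -> (i < 1)%nat).
  { intros i Hi. apply repeat_spec in Hi. lia. }
  assert (H := proj2 (Ha (repeat 0%nat k) Hl (fun _ => s) Hs) 0%nat ltac:(lia)).
  unfold partial_lim in H.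
  assert (Hd : dep 1 (pds (repeat 0%nat k) (Fa a))).
  { apply pds_dep. intros z z' Hz. unfold Fa. rewrite Hz; auto. exact Hl. }
  assert (E : (fun t => pds (repeat 0%nat k) (Fa a) (upd (fun _ => s) 0 t)) = da k).
  { apply functional_extensionality; intro t. unfold da. apply Hd. intros j Hj.
    assert (j = 0%nat) by lia. subst. reflexivity. }
  rewrite E in H. exact H.
Qed.

Lemma Q_deriv G : Q G -> exists G', Q G' /\ forall s, II s -> derivable_pt_lim G s (G' s).
Proof.
  induction 1 as [| |k|c|G1 G2 _ [G1' [Q1 D1]] _ [G2' [Q2 D2]]|G1 G2 Q1 [G1' [Q1' D1]] Q2 [G2' [Q2' D2]]].
  - exists (fun s => / a s). split. constructor. exact HA.
  - exists (fun s => (fun _ => -1) s * da 1 s * (/ a s) * (/ a s)).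
    split. repeat constructor.
    intros s Hs.
    assert (Hd := derivable_pt_lim_div (fct_cte 1) a s 0 (da 1 s) (derivable_pt_lim_const 1 s) (da_deriv 0 s Hs) (Ha0 s Hs)).
    assert (E : (fct_cte 1 / a)%F = fun s => / a s).
    { apply functional_extensionality; intro t. unfold div_fct, fct_cte, Rdiv. ring. }
    rewrite E in Hd.
    replace (-1 * da 1 s * / a s * / a s) with ((0 * a s - da 1 s * fct_cte 1 s) / (a s)²).
    exact Hd. unfold fct_cte, Rsqr. field. apply Ha0; auto.
  - exists (da (S k)). split. constructor. intros; apply da_deriv; auto.
  - exists (fun _ => 0). split. constructor. intros; apply derivable_pt_lim_const.
  - exists (fun s => G1' s + G2' s). split. constructor; auto.
    intros s Hs. apply dplus; auto.
  - exists (fun s => G1' s * G2 s + G1 s * G2' s). split. repeat constructor; auto.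
    intros s Hs. apply dmult; auto.
Qed.

Lemma Q_cont G s : Q G -> II s ->
  forall eps, 0 < eps -> exists d, 0 < d /\ forall u, Rabs (u - s) < d -> Rabs (G u - G s) < eps.
Proof.
  intros HG Hs. destruct (Q_deriv G HG) as [G' [_ HD]]. eapply deriv_cont. apply HD; auto.
Qed.

Inductive EE : (vec -> R) -> Prop :=
| E_const c : EE (fun _ => c)
| E_coord j : (j < 6)%nat -> EE (fun y => y j)
| E_comp G : Q G -> EE (fun y => G (sM y))
| E_phi l : (forall i, In i l -> (i < 3)%nat) -> EE (fun y => pds l (Phi phi) (P3 y))
| E_plus f g : EE f -> EE g -> EE (fun y => f y + g y)
| E_mult f g : EE f -> EE g -> EE (fun y => f y * g y).

Lemma E_cc i : (i < 6)%nat -> EE (fun y => cc i y).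
Proof.
  intro Hi. destruct i as [|[|[|[|[|[|i]]]]]]; try lia; apply E_coord; lia.
Qed.

Lemma EE_class : sclass 6 (Om DD II) EE.
Proof.
  intros f Hf. induction Hf as [c|j Hj|G HG|l Hl|f g Ef [Cf IHf] Eg [Cg IHg]|f g Ef [Cf IHf] Eg [Cg IHg]].
  - split. intros; apply cont_const.
    intros i Hi. exists (fun _ => 0). split. constructor. intros; apply pconst.
  - split. intros; apply cont_coord; auto.
    intros i Hi. exists (fun _ => if Nat.eqb j i then 1 else 0). split. constructor. intros; apply pcoord.
  - split.
    + intros x Hx. apply cont_comp1. apply cont_sM. apply Q_cont; auto. apply Hx.
    + intros i Hi. destruct (Q_deriv G HG) as [G' [QG' DG']].
      exists (fun y => G' (sM y) * cc i y). split. apply E_mult. constructor; auto. apply E_cc; auto.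
      intros y Hy. apply part_sM; auto. apply DG'. apply Hy.
  - split.
    + intros x Hx. assert (HD : D3 DD (P3 x)) by apply Hx.
      apply (cont_comp_vec 6 (Om DD II) 3 (D3 DD) (pds l (Phi phi)) P3 x).
      * apply (proj1 (Hphi l Hl (P3 x) HD)).
      * intros y Hy. apply Hy.
      * intros j Hj. destruct j as [|[|[|j]]]; try lia; unfold P3, mk3; apply cont_coord; lia.
    + intros i Hi. exists (fun y => dP3 (pds l (Phi phi)) i y). split.
      * destruct i as [|[|[|[|[|[|i]]]]]]; try lia; unfold dP3.
        1-3: apply E_const.
        all: apply (E_phi (_ :: l)); intros q [<-|Hq]; [lia|auto].
      * intros y Hy. apply part_P3; auto.
        apply pds_dep; auto. intros z z' Hz. unfold Phi. rewrite (Hz 0%nat), (Hz 1%nat), (Hz 2%nat); auto; lia.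
        intros k Hk. assert (HD : D3 DD (P3 y)) by apply Hy.
        exact (proj2 (Hphi l Hl (P3 y) HD) k Hk).
  - split. intros; apply cont_plus; auto.
    intros i Hi. destruct (IHf i Hi) as [f' [Ef' Df]]. destruct (IHg i Hi) as [g' [Eg' Dg]].
    exists (fun y => f' y + g' y). split. constructor; auto. intros; apply pplus; auto.
  - split. intros; apply cont_mult; auto.
    intros i Hi. destruct (IHf i Hi) as [f' [Ef' Df]]. destruct (IHg i Hi) as [g' [Eg' Dg]].
    exists (fun y => f' y * g y + f y * g' y). split. repeat constructor; auto. intros; apply pmult; auto.
Qed.

Definition CC : vec -> R := fun x => AA (sM x) + phi (x 3%nat) (x 4%nat) (x 5%nat).

Lemma CC_smooth : smooth 6 (Om DD II) CC.
Proof.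
  apply (sclass_smooth 6 (Om DD II) EE). apply open_Om; auto. apply EE_class.
  exact (E_plus _ _ (E_comp AA Q_A) (E_phi nil (fun i H => False_ind _ H))).
Qed.

Lemma CC_pd x j : Om DD II x -> (j < 6)%nat -> pd j CC x = / a (sM x) * cc j x + dP3 (Phi phi) j x.
Proof.
  intros Hx Hj. apply pd_spec. unfold CC.
  change (partial_lim j (fun y => AA (sM y) + Phi phi (P3 y)) x (/ a (sM x) * cc j x + dP3 (Phi phi) j x)).
  apply pplus. apply part_sM; auto. apply HA. apply Hx.
  apply part_P3; auto.
  intros z z' Hz. unfold Phi. rewrite (Hz 0%nat), (Hz 1%nat), (Hz 2%nat); auto; lia.
  intros k Hk. assert (HD : D3 DD (P3 x)) by apply Hx.
  exact (proj2 (Hphi nil (fun i H => False_ind _ H) (P3 x) HD) k Hk).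
Qed.

Lemma CC_casimir : casimir_on (Om DD II) (mu a b phi) CC.
Proof.
  split. apply CC_smooth.
  intros x Hx i Hi.
  assert (Ha1 : a (sM x) <> 0) by (apply Ha0; apply Hx).
  rewrite (rsum_ext 6 _ (fun j => Pi (mu a b phi) x i j * (/ a (sM x) * cc j x + dP3 (Phi phi) j x))).
  2: intros j Hj; rewrite CC_pd; auto.
  destruct i as [|[|[|[|[|[|i]]]]]]; try lia;
  cbv beta iota zeta delta [rsum Pi dP3 cc mu Nat.eqb Nat.add]; unfold gradphi, P3, Phi; field; auto.
Qed.
End Cas.


Theorem mainTheorem11
  (D : R -> R -> R -> Prop) (I : R -> Prop)
  (a : R -> R) (b : R -> R -> R -> R -> R) (phi : R -> R -> R -> R)
  (HDopen : openn 3%nat (fun y => D (y 0%nat) (y 1%nat) (y 2%nat)))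
  (HD0 : forall g1 g2 g3, D g1 g2 g3 -> ~ (g1 = 0 /\ g2 = 0 /\ g3 = 0))
  (HIopen : openn 1%nat (fun y => I (y 0%nat)))
  (Ha : smooth 1%nat (fun y => I (y 0%nat)) (fun y => a (y 0%nat)))
  (Ha0 : forall s, I s -> a s <> 0)
  (Hb : smooth 4%nat (fun y => D (y 0%nat) (y 1%nat) (y 2%nat) /\ I (y 3%nat))
                 (fun y => b (y 0%nat) (y 1%nat) (y 2%nat) (y 3%nat)))
  (Hphi : smooth 3%nat (fun y => D (y 0%nat) (y 1%nat) (y 2%nat))
                   (fun y => phi (y 0%nat) (y 1%nat) (y 2%nat))) :
  let Omega := fun x : vec => D (x 3%nat) (x 4%nat) (x 5%nat) /\ I (sM x) in
  poisson_on Omega (mu a b phi) /\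
  (is_interval I ->
   forall A : R -> R, (forall s, I s -> derivable_pt_lim A s (/ a s)) ->
   casimir_on Omega (mu a b phi)
     (fun x => A (sM x) + phi (x 3%nat) (x 4%nat) (x 5%nat))).
Proof.
  intros Omega. split.
  - intros f g h Hf Hg Hh x Hx.
    exact (jacobi D I a b phi HDopen HIopen Ha Hb Hphi f g h x Hf Hg Hh Hx).
  - intros _ A HA.
    exact (CC_casimir D I a b phi A HDopen HIopen Ha Ha0 Hphi HA).
Qed.
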